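(* Every extended Runge--Kutta method is affine equivariant: if $a(x)=Ax+b$ is an affine map from $\mathbb{R}^p$ to $\mathbb{R}^n$, $f$ is a vector field on $\mathbb{R}^p$ and $g$ a vector field on $\mathbb{R}^n$ with $g(Ax+b)=Af(x)$ for all $x\in\mathbb{R}^p$, then $a\circ\Phi_h(f)=\Phi_h(g)\circ a$, where $\Phi_h(f)$ denotes the step map $z_0\mapsto z_1$ of the extended Runge--Kutta method applied to $\dot z=f(z)$ (whenever these step maps are well defined).
   Context: Fix integers $m\ge s\ge1$, real coefficients $a_{ij}$ ($1\le i\le s$, $1\le j\le m$), $b_i$ ($1\le i\le m$), and a full-rank $(m-s)\times m$ real matrix $(d_{ij})$. For an ODE $\dot z=f(z)$ on $\mathbb{R}^n$, the extended Runge--Kutta method with these parameters maps $z_0$ to $z_1$ defined by the equations, with unknowns $k_1,\dots,k_m\in\mathbb{R}^n$: $Z_i=z_0+h\sum_{j=1}^m a_{ij}k_j$ ($i=1,\dots,s$), $k_i=f(Z_i)$ ($i=1,\dots,s$), $0=\sum_{j=1}^m d_{ij}k_j$ ($i=1,\dots,m-s$), and $z_1=z_0+h\sum_{i=1}^m b_ik_i$. The same parameters are used for vector fields in every dimension. *)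

(* Defs.v *)
From HB Require Import structures.
From mathcomp Require Import all_boot all_order all_algebra.
From mathcomp Require Import reals.
Set Implicit Arguments. Unset Strict Implicit. Unset Printing Implicit Defensive.
Import Order.TTheory GRing.Theory Num.Theory.
Local Open Scope ring_scope.

Definition ERK_step (R : realType) (m s : nat) (hsm : (s <= m)%N)
    (a : 'M[R]_(s, m)) (bb : 'rV[R]_m) (d : 'M[R]_(m - s, m))
    (n : nat) (f : 'cV[R]_n -> 'cV[R]_n) (h : R) (z0 z1 : 'cV[R]_n) : Prop :=
  exists k : 'I_m -> 'cV[R]_n,
    (forall i : 'I_s,
        k (widen_ord hsm i) = f (z0 + h *: \sum_(j < m) a i j *: k j)) /\
    (forall i : 'I_(m - s), \sum_(j < m) d i j *: k j = 0) /\
    z1 = z0 + h *: \sum_(i < m) bb 0 i *: k i.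

Definition ERK_well_defined (R : realType) (m s : nat) (hsm : (s <= m)%N)
    (a : 'M[R]_(s, m)) (bb : 'rV[R]_m) (d : 'M[R]_(m - s, m))
    (n : nat) (f : 'cV[R]_n -> 'cV[R]_n) (h : R) (z0 : 'cV[R]_n) : Prop :=
  exists! z1, ERK_step hsm a bb d f h z0 z1.

(* Main.v *)
Require Import Defs.
From HB Require Import structures.
From mathcomp Require Import all_boot all_order all_algebra.
From mathcomp Require Import reals.
Import Order.TTheory GRing.Theory Num.Theory.
Local Open Scope ring_scope.

Theorem proposition2 (R : realType) (m s : nat) (hs1 : (1 <= s)%N)
    (hsm : (s <= m)%N) (a : 'M[R]_(s, m)) (bb : 'rV[R]_m)
    (d : 'M[R]_(m - s, m)) (hd : \rank d = (m - s)%N)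
    (p n : nat) (A : 'M[R]_(n, p)) (b : 'cV[R]_n)
    (f : 'cV[R]_p -> 'cV[R]_p) (g : 'cV[R]_n -> 'cV[R]_n)
    (hfg : forall x : 'cV[R]_p, g (A *m x + b) = A *m f x)
    (h : R) (x : 'cV[R]_p) :
  ERK_well_defined hsm a bb d f h x ->
  ERK_well_defined hsm a bb d g h (A *m x + b) ->
  forall (x1 : 'cV[R]_p) (y1 : 'cV[R]_n),
    ERK_step hsm a bb d f h x x1 ->
    ERK_step hsm a bb d g h (A *m x + b) y1 ->
    y1 = A *m x1 + b.
Proof.
move=> _ [y [_ Huniq]] x1 y1 [k [Hk [Hd Hx1]]] Hy1.
have Hlin : forall c : 'I_m -> R,
    A *m (\sum_(j < m) c j *: k j) = \sum_(j < m) c j *: (A *m k j).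
  move=> c; rewrite mulmx_sumr; apply: eq_bigr => j _; by rewrite scalemxAr.
have Hst : ERK_step hsm a bb d g h (A *m x + b) (A *m x1 + b).
  exists (fun j => A *m k j); split; [|split].
  - move=> i; rewrite Hk -hfg mulmxDr -scalemxAr Hlin; congr (g _).
    by rewrite addrAC.
  - by move=> i; rewrite -Hlin Hd mulmx0.
  - by rewrite Hx1 mulmxDr -scalemxAr Hlin addrAC.
have E1 := Huniq _ Hy1. have E2 := Huniq _ Hst. by rewrite -E1 -E2.
Qed.
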